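(* Let $N=2p$ and let $2^{-1}$ denote the inverse of $2$ modulo $2^N-1$. Then (1) $S(2)\equiv \big(1-(2^p+1)2^{-1}\big)+(2^p+1)2^{-1}\cdot\frac{2^{N}-1}{3}-2^{-1}\Big(\big(\tfrac{2}{p}\big)2^p+1\Big)G_p \pmod{2^N-1}$; (2) $G_p^2\equiv\big(\tfrac{-1}{p}\big)\Big(p-\frac{2^N-1}{3}\Big)\pmod{2^N-1}$.
   Context: Let $p$ be an odd prime and $g$ an odd integer which is a primitive root modulo $p$ and modulo $2p$. Define $D_0^{(p)}=\{g^{2k}\bmod p : 0\le k\le \frac{p-1}{2}-1\}$, $D_1^{(p)}=\{g^{2k+1}\bmod p : 0\le k\le \frac{p-1}{2}-1\}$, $D_0^{(2p)}=\{g^{2k}\bmod 2p : 0\le k\le \frac{p-1}{2}-1\}$, $D_1^{(2p)}=\{g^{2k+1}\bmod 2p : 0\le k\le \frac{p-1}{2}-1\}$, viewed as subsets of $\{0,\dots,p-1\}$ resp. $\{0,1,\dots,2p-1\}$. For $j\in\{0,1\}$ let $2D_j^{(p)}=\{2a \bmod 2p : a\in D_j^{(p)}\}$. Let $C_1=D_1^{(2p)}\cup 2D_1^{(p)}\cup\{0\}$ and $C_0=D_0^{(2p)}\cup 2D_0^{(p)}\cup\{p\}$ (these partition $\{0,\dots,2p-1\}$). The binary sequence $s$ of period $2p$ is $s_i=1$ if $i\bmod 2p\in C_1$ and $s_i=0$ otherwise, and $S(x)=\sum_{i=0}^{2p-1}s_ix^i\in\mathbb{Z}[x]$, so $S(2)=\sum_{i=0}^{2p-1}s_i2^i$.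 Here $\left(\frac{a}{p}\right)$ is the Legendre symbol, and $G_p=\sum_{a=1}^{p-1}\left(\frac{a}{p}\right)2^{2a}\bmod (2^{2p}-1)$. *)

(* Defs.v *)
From HB Require Import structures.
From mathcomp Require Import all_boot all_order all_algebra.
Set Implicit Arguments. Unset Strict Implicit. Unset Printing Implicit Defensive.
Import Order.TTheory GRing.Theory Num.Theory.

Definition primitive_root (g n : nat) : bool :=
  coprime g n && (g ^ totient n %% n == 1 %% n) &&
  [forall k : 'I_(totient n), (0 < k) ==> (g ^ k %% n != 1 %% n)].

Definition legendre (a : int) (p : nat) : int :=
  if (p%:Z %| a)%Z then 0%R
  else if [exists x : 'I_p, (p%:Z %| (x%:Z ^+ 2 - a)%R)%Z] then 1%R else (-1)%R.

Definition half (p : nat) : nat := (p.-1)./2.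

Definition D0p (g p : nat) : seq nat := [seq g ^ (2 * k) %% p | k <- iota 0 (half p)].
Definition D1p (g p : nat) : seq nat := [seq g ^ (2 * k + 1) %% p | k <- iota 0 (half p)].
Definition D02p (g p : nat) : seq nat := [seq g ^ (2 * k) %% (2 * p) | k <- iota 0 (half p)].
Definition D12p (g p : nat) : seq nat := [seq g ^ (2 * k + 1) %% (2 * p) | k <- iota 0 (half p)].

Definition twoD (p : nat) (D : seq nat) : seq nat := [seq (2 * a) %% (2 * p) | a <- D].

Definition C1 (g p : nat) : seq nat := D12p g p ++ twoD p (D1p g p) ++ [:: 0].

Definition s_seq (g p i : nat) : nat := (i %% (2 * p) \in C1 g p : nat).

Definition S2 (g p : nat) : int := (\sum_(i < 2 * p) (s_seq g p i)%:Z * 2%:Z ^+ i)%R.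

Definition Gp (p : nat) : int :=
  ((\sum_(1 <= a < p) legendre a%:Z p * 2%:Z ^+ (2 * a))%R %% (2%:Z ^+ (2 * p) - 1)%R)%Z.

(* Main.v *)
Require Import Defs.
From HB Require Import structures.
From mathcomp Require Import all_boot all_order all_algebra.
From mathcomp Require Import zify ring lra.
Set Implicit Arguments. Unset Strict Implicit. Unset Printing Implicit Defensive.
Import Order.TTheory GRing.Theory Num.Theory.
Local Open Scope ring_scope.

Lemma Zn_valE (n : nat) (x : 'Z_n) : (1 < n)%N -> (val x < n)%N.
Proof. by move=> n1; have := ltn_ord x; rewrite [X in (_ < X)%N -> _]Zp_cast. Qed.

Lemma Zn_nat_eq (n a b : nat) : (1 < n)%N ->
  ((a%:R : 'Z_n) == b%:R) = (a == b %[mod n])%N.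
Proof. by move=> n1; rewrite -val_eqE /= !val_Zp_nat. Qed.

Lemma Zn_dvd (n : nat) (z : int) : (1 < n)%N ->
  ((z%:~R : 'Z_n) == 0) = (n%:Z %| z)%Z.
Proof.
move=> n1; case: z => k.
  rewrite -pmulrn (_ : 0 = 0%:R) // Zn_nat_eq // mod0n dvdzE /=.
  by rewrite /dvdn.
rewrite NegzE intrN oppr_eq0 -pmulrn (_ : 0 = 0%:R) // Zn_nat_eq // mod0n.
by rewrite dvdzE /= /dvdn.
Qed.

Lemma Zn_eqmod (n : nat) (a b : int) : (1 < n)%N ->
  (a%:~R : 'Z_n) = b%:~R -> (a = b %[mod n%:Z])%Z.
Proof.
move=> n1 e; apply/eqP; rewrite eqz_mod_dvd -Zn_dvd // intrB e subrr //.
Qed.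

Lemma reidx (R : Type) (idx : R) (op : Monoid.com_law idx) (s : seq nat)
  (f : nat -> nat) (F : nat -> R) :
  uniq s -> {in s &, injective f} -> {in s, forall x, f x \in s} ->
  \big[op/idx]_(x <- s) F (f x) = \big[op/idx]_(x <- s) F x.
Proof.
move=> us fi fs; rewrite -(big_map f xpredT F); apply: perm_big.
have um : uniq (map f s) by rewrite map_inj_in_uniq.
have ss : {subset map f s <= s} by move=> _ /mapP[x xs ->]; apply: fs.
have [_ eqs] := uniq_min_size um ss (eq_leq (esym (size_map f s))).
exact: uniq_perm.
Qed.

Section NT.
Variables (p g : nat).
Hypotheses (pP : prime p) (podd : odd p) (grt : primitive_root g p).
Local Notation F := 'Z_p.

Let p1 : (1 < p)%N := prime_gt1 pP.
Let q := p.-1.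
Let gp : F := g%:R.

Lemma q_even : odd q = false.
Proof. by move: podd p1; rewrite /q; case: p => // n /=; case: (odd n). Qed.

Lemma q_pos : (0 < q)%N.
Proof. rewrite /q; move: p1; case: p => //. Qed.

Lemma gp_unit : gp \is a GRing.unit.
Proof. by move: grt => /andP[/andP[c _] _]; rewrite unitZpE // coprime_sym. Qed.

Lemma gpX k : gp ^+ k = (g ^ k)%:R.
Proof. by rewrite natrX. Qed.

Lemma gpq : gp ^+ q = 1.
Proof.
move: grt => /andP[/andP[_ e] _]; rewrite totient_prime // in e.
by rewrite gpX (_ : (1 : F) = 1%:R) //; apply/eqP; rewrite Zn_nat_eq.
Qed.

Lemma gp_ord k : (0 < k < q)%N -> gp ^+ k != 1.
Proof.
move=> /andP[k0 kq]; move: grt => /andP[_ /forallP o].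
have kt : (k < totient p)%N by rewrite totient_prime.
have := o (Ordinal kt); rewrite /= k0 /= => ne.
by rewrite gpX (_ : (1 : F) = 1%:R) // Zn_nat_eq.
Qed.

Lemma gp_mod e : gp ^+ e = gp ^+ (e %% q).
Proof. by rewrite {1}(divn_eq e q) exprD mulnC exprM gpq expr1n mul1r. Qed.

Lemma gp_neq0 k : gp ^+ k != 0.
Proof.
apply/negP => /eqP e; have := unitrX k gp_unit; by rewrite e unitr0.
Qed.

Lemma gp_inj m n : (m < q)%N -> (n < q)%N -> gp ^+ m = gp ^+ n -> m = n.
Proof.
wlog mn : m n / (m <= n)%N.
  move=> W hm hn e; case/orP: (leq_total m n) => h; first exact: W.
  by symmetry; apply: W.
move=> hm hn; rewrite -(subnKC mn) exprD => e.
have e1 : gp ^+ (n - m)%N = 1.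
  apply: (mulrI (unitrX m gp_unit)); by rewrite -e mulr1.
case: (posnP (n - m)%N) => [|pos]; first lia.
have : (0 < n - m < q)%N by rewrite pos (leq_ltn_trans (leq_subr _ _) hn).
by move/gp_ord; rewrite e1 eqxx.
Qed.

Lemma gp_surj (x : F) : x != 0 -> exists2 m, (m < q)%N & x = gp ^+ m.
Proof.
move=> x0.
set s := [seq (g ^ m %% p)%N | m <- iota 0 q].
have us : uniq s.
  rewrite map_inj_in_uniq ?iota_uniq // => m n; rewrite !mem_iota !add0n.
  move=> /andP[_ hm] /andP[_ hn] e; apply: gp_inj => //.
  by rewrite !gpX; apply/eqP; rewrite Zn_nat_eq //; apply/eqP.
have ss : {subset s <= iota 1 q}.
  move=> _ /mapP[m _ ->]; rewrite mem_iota.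
  have -> : (1 + q = p)%N by rewrite /q; move: p1; case: p.
  rewrite ltn_pmod ?(ltnW p1) // andbT lt0n; apply/negP => /eqP e.
  have := gp_neq0 m; rewrite gpX -Zp_nat_mod // e eqxx //.
have sz : (size (iota 1 q) <= size s)%N by rewrite size_map !size_iota.
have [_ eqs] := uniq_min_size us ss sz.
have : val x \in iota 1 q.
  rewrite mem_iota.
  have -> : (1 + q = p)%N by rewrite /q; move: p1; case: p.
  rewrite Zn_valE // andbT lt0n; apply: contra x0 => /eqP v0.
  by apply/eqP; apply: val_inj.
rewrite -eqs => /mapP[m]; rewrite mem_iota => /andP[_ hm] e.
exists m => //; rewrite -[x]natr_Zp e Zp_nat_mod // gpX //.
Qed.

Definition leg (x : F) : int :=
  if x == 0 then 0 else if [exists y : F, y ^+ 2 == x] then 1 else -1.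

Lemma leg0 : leg 0 = 0.
Proof. by rewrite /leg eqxx. Qed.

Lemma leg_pow m : leg (gp ^+ m) = (-1) ^+ m.
Proof.
rewrite /leg (negbTE (gp_neq0 m)).
case: (boolP (odd m)) => om.
  have -> : [exists y : F, y ^+ 2 == gp ^+ m] = false.
    apply/negbTE/negP => /existsP[y /eqP ey].
    have y0 : y != 0.
      apply: contraTneq (gp_neq0 m) => y0; by rewrite -ey y0 expr0n.
    have [n hn ey'] := gp_surj y0.
    move: ey; rewrite ey' -exprM (gp_mod (n * 2)%N) (gp_mod m) => /gp_inj.
    have qp := q_pos.
    move=> /(_ (ltn_pmod _ qp) (ltn_pmod _ qp)) /(congr1 odd).
    by rewrite !odd_mod ?q_even // oddM /= andbF om.
  by rewrite -signr_odd om.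
have -> : [exists y : F, y ^+ 2 == gp ^+ m].
  apply/existsP; exists (gp ^+ m./2); rewrite -exprM muln2 even_halfK //.
by rewrite -signr_odd (negbTE om).
Qed.

Lemma leg_mul x y : leg (x * y) = leg x * leg y.
Proof.
case: (eqVneq x 0) => [->|x0]; first by rewrite mul0r leg0 mul0r.
case: (eqVneq y 0) => [->|y0]; first by rewrite mulr0 leg0 mulr0.
have [m _ ->] := gp_surj x0; have [n _ ->] := gp_surj y0.
by rewrite -exprD !leg_pow exprD.
Qed.

Lemma leg_sq x : x != 0 -> leg x * leg x = 1.
Proof. by move=> x0; have [m _ ->] := gp_surj x0; rewrite leg_pow -expr2 sqrr_sign. Qed.

Lemma legendreE z : legendre z p = leg (z%:~R).
Proof.
rewrite /legendre /leg Zn_dvd //; case: ifP => // _.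
congr (if _ then _ else _); apply/existsP/existsP.
  case=> x hx; exists ((x : nat)%:R).
  rewrite -Zn_dvd // intrB subr_eq0 rmorphXn /= in hx.
  by rewrite -[X in _ == X](eqP hx).
case=> y hy; exists (Ordinal (Zn_valE y p1)).
rewrite -Zn_dvd // intrB subr_eq0 rmorphXn /=.
by rewrite -[((nat_of_ord y)%:Z)%:~R]/((nat_of_ord y)%:R) natr_Zp.
Qed.

Lemma D1p_range a : a \in D1p g p -> (0 < a < p)%N.
Proof.
case/mapP=> k _ ->; rewrite ltn_pmod ?(ltnW p1) // andbT lt0n.
apply/negP => /eqP e; have := gp_neq0 (2 * k + 1)%N.
by rewrite gpX -Zp_nat_mod // e eqxx.
Qed.

Lemma D1p_mem a : (0 < a < p)%N -> (a \in D1p g p) = (leg a%:R == -1).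
Proof.
move=> /andP[a0 ap]; apply/idP/idP.
  case/mapP=> k _ ->; rewrite Zp_nat_mod // -gpX leg_pow.
  by rewrite -signr_odd oddD oddM /=.
have an0 : (a%:R : F) != 0.
  rewrite -[0]/(0%:R) Zn_nat_eq // mod0n modn_small //; lia.
have [m hm e] := gp_surj an0; rewrite e leg_pow.
case: (boolP (odd m)) => om; last by rewrite -signr_odd (negbTE om).
move=> _; apply/mapP; exists m./2.
  rewrite mem_iota add0n (_ : Defs.half p = (p.-1)./2) //.
  have : (m./2.*2 = m.-1)%N by rewrite odd_halfK.
  have : ((p.-1)./2.*2 = p.-1)%N by rewrite even_halfK // -/q q_even.
  rewrite /q in hm; rewrite -!muln2; move: (m./2) ((p.-1)./2) => x y; lia.
have -> : (2 * m./2 + 1 = m)%N by rewrite mul2n odd_halfK //; lia.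
move: e; rewrite gpX => /eqP; rewrite Zn_nat_eq // modn_small // => /eqP //.
Qed.

End NT.

Section Reidx.
Variables (V : zmodType) (p : nat).
Hypothesis pP : prime p.
Let p1 : (1 < p)%N := prime_gt1 pP.

Lemma mul_reidx (u : nat) (F : nat -> V) : (u %% p != 0)%N ->
  \sum_(1 <= a < p) F ((u * a) %% p)%N = \sum_(1 <= a < p) F a.
Proof.
move=> u0.
have uu : (u%:R : 'Z_p) \is a GRing.unit.
  by rewrite unitZpE // prime_coprime.
apply: reidx; first exact: iota_uniq.
  move=> a b; rewrite !mem_index_iota => /andP[a1 ap] /andP[b1 bp] e.
  have : (a%:R : 'Z_p) = b%:R.
    apply: (mulrI uu); rewrite -!natrM; apply/eqP; rewrite Zn_nat_eq //.
    by apply/eqP.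
  by move/eqP; rewrite Zn_nat_eq // !modn_small // => /eqP.
move=> a; rewrite !mem_index_iota => /andP[a1 ap].
rewrite ltn_pmod ?(ltnW p1) // andbT lt0n; apply/negP => /eqP e.
have : ((u * a)%N%:R : 'Z_p) = 0 by rewrite -Zp_nat_mod // e.
rewrite natrM => e'.
have : (a%:R : 'Z_p) = 0 by apply: (mulrI uu); rewrite mulr0.
move/eqP; by rewrite (_ : 0 = 0%:R) // Zn_nat_eq // mod0n modn_small //; lia.
Qed.

End Reidx.

Lemma rot_reidx (V : zmodType) (p k : nat) (F : nat -> V) : (0 < p)%N ->
  \sum_(0 <= b < p) F ((b + k) %% p)%N = \sum_(0 <= b < p) F b.
Proof.
move=> p0; apply: reidx; first exact: iota_uniq.
  move=> a b; rewrite !mem_index_iota => /andP[_ ap] /andP[_ bp] /eqP.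
  by rewrite eqn_modDr !modn_small // => /eqP.
by move=> a _; rewrite mem_index_iota ltn_pmod.
Qed.

Lemma sum_even_odd (V : zmodType) (n : nat) (F : nat -> V) :
  \sum_(0 <= i < 2 * n) F i =
  \sum_(0 <= b < n) F (2 * b)%N + \sum_(0 <= b < n) F (2 * b + 1)%N.
Proof.
elim: n => [|n IH]; first by rewrite !big_geq // addr0.
rewrite (_ : (2 * n.+1 = (2 * n).+2)%N); last by rewrite mulnS.
rewrite !big_nat_recr //= IH addrACA -!addrA; congr (_ + _); congr (_ + _).
by rewrite addn1.
Qed.

Lemma aux4 (R : comNzRingType) (A B X Y : R) : A * A = 1 ->
  A * X * (A * B * Y) = B * (X * Y).
Proof.
move=> AA; transitivity ((A * A) * (B * (X * Y))); first by ring.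
by rewrite AA mul1r.
Qed.

Section RingPart.
Variables (R : comNzRingType) (p : nat) (chi : nat -> int) (D : seq nat)
  (s : nat -> bool) (w h : R).
Hypotheses (pP : prime p) (podd : odd p) (w2p : w ^+ (2 * p)%N = 1)
  (h2 : 2 * h = 1)
  (chi_mul : forall a b, chi ((a * b) %% p)%N = chi a * chi b)
  (chi_sq : forall a, (0 < a < p)%N -> chi a * chi a = 1)
  (chi_sum : \sum_(1 <= a < p) chi a = 0)
  (chi_ind : forall a, (0 < a < p)%N -> 2 * ((a \in D) : nat)%:Z = 1 - chi a)
  (D0 : 0%N \notin D)
  (s_even : forall b, (b < p)%N -> s (2 * b)%N = (b == 0%N) || (b \in D))
  (s_odd : forall b, (b < p)%N -> s (2 * b + 1)%N = (((2 * b + 1) %% p)%N \in D)).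

Let p1 : (1 < p)%N := prime_gt1 pP.
Let p2 : (2 < p)%N.
Proof. by move: p1 podd; case: p => [|[|[|]]]. Qed.

Let x := w ^+ 2.
Let c a := (chi a)%:~R : R.
Definition GG := \sum_(1 <= a < p) c a * x ^+ a.
Definition TT := \sum_(0 <= a < p) x ^+ a.

Lemma xp : x ^+ p = 1.
Proof. by rewrite /x -exprM. Qed.

Lemma wmod n : w ^+ n = w ^+ (n %% (2 * p))%N.
Proof. by rewrite {1}(divn_eq n (2 * p)) exprD mulnC exprM w2p expr1n mul1r. Qed.

Lemma xmod n : x ^+ n = x ^+ (n %% p)%N.
Proof. by rewrite {1}(divn_eq n p) exprD mulnC exprM xp expr1n mul1r. Qed.

Lemma ind_R a : (0 < a < p)%N -> ((a \in D) : nat)%:R = h * (1 - c a) :> R.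
Proof.
move=> ha; have := congr1 (fun z : int => z%:~R : R) (chi_ind ha).
rewrite /= intrM intrB /= -/(c a) => e.
have e' : 2 * ((a \in D) : nat)%:R = 1 - c a := e.
by rewrite -e' mulrA (mulrC h) h2 mul1r.
Qed.

Lemma T1 : \sum_(1 <= a < p) x ^+ a = TT - 1.
Proof. by rewrite /TT [in RHS]big_ltn ?(ltnW p1) // expr0 addrC addKr. Qed.

Lemma even_sum :
  \sum_(0 <= b < p) ((s (2 * b)%N : nat)%:R * w ^+ (2 * b)%N) = 1 + h * (TT - 1 - GG).
Proof.
rewrite big_ltn ?(ltnW p1) // s_even ?(ltnW p1) // eqxx /= muln0 expr0 mulr1.
congr (_ + _); rewrite -T1 /GG mulrBr !mulr_sumr -sumrB.
apply: eq_big_nat => b /andP[b1 bp].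
rewrite s_even // (_ : (b == 0%N) = false); last by case: b b1 {bp}.
rewrite /= ind_R ?b1 // exprM -/x; ring.
Qed.

Lemma wcong n1 n2 : (n1 = n2 %[mod 2 * p])%N -> w ^+ n1 = w ^+ n2.
Proof. by rewrite wmod => ->; rewrite -wmod. Qed.

Let k := (p./2).+1.
Let k2 : (2 * k = p + 1)%N.
Proof. have := odd_double_half p; rewrite podd -muln2 /k; lia. Qed.

Lemma odd_sum :
  \sum_(0 <= b < p) ((s (2 * b + 1)%N : nat)%:R * w ^+ (2 * b + 1)%N)
  = w ^+ p * h * (TT - 1 - c 2 * GG).
Proof.
pose Fc c0 := ((((2 * c0) %% p)%N \in D) : nat)%:R * (w ^+ p * x ^+ c0).
transitivity (\sum_(0 <= b < p) Fc ((b + k) %% p)%N).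
  apply: eq_big_nat => b /andP[_ bp]; rewrite s_odd // /Fc.
  have e1 : ((2 * ((b + k) %% p)) %% p = (2 * b + 1) %% p)%N.
    rewrite modnMmr (_ : (2 * (b + k) = (2 * b + 1) + p)%N); first exact: modnDr.
    lia.
  rewrite e1; congr (_ * _); rewrite /x -exprM -exprD; apply: wcong.
  rewrite muln_modr modnDmr (_ : (p + 2 * (b + k) = (2 * b + 1) + 2 * p)%N).
    by rewrite modnDr.
  lia.
rewrite rot_reidx ?(ltnW p1) // big_ltn ?(ltnW p1) //.
rewrite {1}/Fc muln0 mod0n (negbTE D0) mul0r add0r.
rewrite -T1 /GG mulrBr !mulr_sumr -sumrB.
apply: eq_big_nat => c0 /andP[c1 cp]; rewrite /Fc.
have hm : (0 < (2 * c0) %% p < p)%N.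
  rewrite ltn_pmod ?(ltnW p1) // andbT lt0n; apply/negP => /eqP.
  move/eqP; rewrite -/(dvdn p (2 * c0)) Euclid_dvdM //; case/orP => /dvdn_leq.
    by move=> /(_ isT); move: p2; lia.
  by move=> /(_ c1); move: cp; lia.
rewrite ind_R // /c chi_mul intrM; ring.
Qed.

Lemma sum_last (V : zmodType) m n (F : nat -> V) : (m <= n.-1)%N -> (0 < n)%N ->
  \sum_(m <= i < n) F i = \sum_(m <= i < n.-1) F i + F n.-1.
Proof. by case: n => // n /= mn _; rewrite big_nat_recr. Qed.

Lemma GG_sq : GG ^+ 2 = c (p.-1) * (p%:R - TT).
Proof.
rewrite expr2 {1}/GG mulr_suml.
transitivity (\sum_(1 <= a < p) \sum_(1 <= c0 < p) c c0 * x ^+ (a * (1 + c0))%N).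
  apply: eq_big_nat => a /andP[a1 ap].
  have ua : (a %% p != 0)%N by rewrite modn_small // -lt0n.
  rewrite /GG mulr_sumr.
  rewrite -(@mul_reidx R p pP a (fun b => c a * x ^+ a * (c b * x ^+ b)) ua).
  apply: eq_big_nat => b /andP[b1 bp].
  rewrite /c chi_mul intrM -/(c a) -/(c b) -xmod mulnDr muln1 exprD.
  have caa : c a * c a = 1 by rewrite /c -intrM chi_sq ?a1.
  exact: aux4.
rewrite exchange_big_nat /=.
rewrite sum_last ?(ltnW p1) //; last by move: p2; case: p => // [[]].
have -> : \sum_(1 <= i < p) c p.-1 * x ^+ (i * (1 + p.-1))%N = c p.-1 *+ p.-1.
  rewrite (eq_big_nat _ _ (F2 := fun=> c p.-1)).
    by rewrite sumr_const_nat subn1.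
  move=> a _; rewrite add1n prednK ?(ltnW p1) // mulnC exprM xp expr1n mulr1 //.
rewrite (eq_big_nat _ _ (F2 := fun c0 => c c0 * (TT - 1))); last first.
  move=> c0 /andP[c1 cp]; rewrite -mulr_sumr; congr (_ * _).
  have u0 : ((1 + c0) %% p != 0)%N.
    by rewrite modn_small; [rewrite add1n | move: cp; case: p => // n; lia].
  rewrite -T1 -(@mul_reidx R p pP (1 + c0) (fun b => x ^+ b) u0).
  by apply: eq_big_nat => a _; rewrite xmod mulnC.
rewrite -mulr_suml.
have hs : \sum_(1 <= i < p.-1) c i = - c p.-1.
  have : \sum_(1 <= i < p) c i = 0.
    by rewrite /c -rmorph_sum chi_sum.
  rewrite sum_last ?(ltnW p1) //; last by move: p2; case: p => // [[]].
  by move/eqP; rewrite addr_eq0 => /eqP.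
rewrite hs -[c p.-1 *+ _]mulr_natr.
have -> : (p%:R : R) = (p.-1)%:R + 1 by rewrite natr1 prednK // (ltnW p1).
ring.
Qed.

End RingPart.

Section NT2.
Variables (p g : nat).
Hypotheses (pP : prime p) (podd : odd p) (gO : odd g) (grt : primitive_root g p).
Local Notation F := 'Z_p.
Let p1 : (1 < p)%N := prime_gt1 pP.
Let chi a := leg (a%:R : F).

Lemma nat_nz a : (0 < a < p)%N -> (a%:R : F) != 0.
Proof.
move=> /andP[a0 ap]; rewrite (_ : 0 = 0%:R) // Zn_nat_eq // mod0n modn_small //.
by rewrite -lt0n.
Qed.

Lemma chi_mul a b : chi ((a * b) %% p)%N = chi a * chi b.
Proof. by rewrite /chi Zp_nat_mod // natrM (leg_mul pP podd grt). Qed.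

Lemma chi_sq a : (0 < a < p)%N -> chi a * chi a = 1.
Proof. move=> ha; rewrite /chi (leg_sq pP podd grt) // nat_nz //. Qed.

Lemma chi_ind a : (0 < a < p)%N -> 2 * ((a \in D1p g p) : nat)%:Z = 1 - chi a.
Proof.
move=> ha; rewrite (D1p_mem pP podd grt ha) /chi.
have [m _ ->] := gp_surj pP podd grt (nat_nz ha); rewrite (leg_pow pP podd grt).
by rewrite -signr_odd; case: (odd m).
Qed.

Lemma chi_sum : \sum_(1 <= a < p) chi a = 0.
Proof.
have g0 : (g %% p != 0)%N.
  apply/negP => /eqP e; have := gp_neq0 pP grt 1.
  by rewrite expr1 -Zp_nat_mod // e eqxx.
have := @mul_reidx _ p pP g chi g0.
under eq_big_nat => a _ do rewrite chi_mul.
rewrite -mulr_sumr.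
have -> : chi g = -1.
  by rewrite /chi -[(g%:R : F)]expr1 (leg_pow pP podd grt).
move: (\sum_(1 <= a < p) chi a) => S; lia.
Qed.

Lemma D0 : 0%N \notin D1p g p.
Proof. by apply/negP => /(D1p_range pP grt). Qed.

End NT2.

Section Memb.
Local Open Scope nat_scope.
Variables (p g : nat).
Hypotheses (pP : prime p) (podd : odd p) (gO : odd g) (grt : primitive_root g p).

Lemma D12p_odd y : y \in D12p g p -> odd y.
Proof.
case/mapP=> k _ ->; rewrite odd_mod; first by rewrite oddX gO orbT.
by rewrite oddM.
Qed.

Lemma twoD_even y : y \in twoD p (D1p g p) -> ~~ odd y.
Proof. by case/mapP=> a _ ->; rewrite odd_mod ?oddM. Qed.

Lemma s_even b : (b < p)%N ->
  ((2 * b) %% (2 * p) \in C1 g p) = (b == 0%N) || (b \in D1p g p).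
Proof.
move=> bp; rewrite modn_small; last lia.
rewrite /C1 !mem_cat inE.
have -> : (2 * b \in D12p g p) = false.
  by apply/negP => /D12p_odd; rewrite oddM.
have -> : (2 * b \in twoD p (D1p g p)) = (b \in D1p g p).
  apply/idP/idP.
    case/mapP=> a aD; have := D1p_range pP grt aD.
    move=> /andP[_ ap]; rewrite modn_small; last lia.
    by move=> e; have -> : b = a by lia.
  move=> bD; apply/mapP; exists b => //; rewrite modn_small //; lia.
by rewrite orbC /= (_ : (2 * b == 0)%N = (b == 0%N)) //; lia.
Qed.

Lemma s_odd b : (b < p)%N ->
  ((2 * b + 1) %% (2 * p) \in C1 g p) = (((2 * b + 1) %% p)%N \in D1p g p).
Proof.
move=> bp; rewrite modn_small; last lia.
rewrite /C1 !mem_cat inE.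
have -> : (2 * b + 1 \in twoD p (D1p g p)) = false.
  by apply/negP => /twoD_even; rewrite oddD oddM.
rewrite (_ : (2 * b + 1 == 0)%N = false) ?orbF; last lia.
apply/idP/idP.
  case/mapP=> k kI ->; rewrite modn_dvdm ?dvdn_mull //.
  by apply/mapP; exists k.
case/mapP=> k kI e; apply/mapP; exists k => //.
have : (2 * b + 1 == g ^ (2 * k + 1) %[mod 2 * p])%N.
  rewrite chinese_remainder ?coprime2n // !modn2 oddD oddM oddX gO orbT /=.
  by rewrite e.
by move/eqP; rewrite (modn_small (m := (2 * b + 1)%N)) //; lia.
Qed.

End Memb.

Lemma Zn_eqmod' (n : nat) (a b : int) : (1 < n)%N ->
  (a = b %[mod n%:Z])%Z -> (a%:~R : 'Z_n) = b%:~R.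
Proof.
move=> n1 /eqP; rewrite eqz_mod_dvd -Zn_dvd // intrB subr_eq0 => /eqP //.
Qed.

Lemma Zn_modz (n : nat) (z : int) : (1 < n)%N ->
  (((z %% n%:Z)%Z)%:~R : 'Z_n) = z%:~R.
Proof.
by move=> n1; apply: Zn_eqmod' => //; exact: modz_mod.
Qed.

Lemma sum4 (n : nat) : 3 * \sum_(0 <= a < n) (4 : int) ^+ a = 4 ^+ n - 1.
Proof.
elim: n => [|n IH]; first by rewrite big_geq.
rewrite big_nat_recr //= mulrDr IH exprS; ring.
Qed.

Theorem lemma9 (p g : nat) (inv2 : int) :
  prime p -> odd p -> odd g -> primitive_root g p -> primitive_root g (2 * p) ->
  (2 * inv2 = 1 %[mod 2%:Z ^+ (2 * p) - 1])%Z ->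
  (S2 g p =
     (1 - (2%:Z ^+ p + 1) * inv2)
     + (2%:Z ^+ p + 1) * inv2 * ((2%:Z ^+ (2 * p) - 1) %/ 3)%Z
     - inv2 * (legendre 2 p * 2%:Z ^+ p + 1) * Gp p
     %[mod 2%:Z ^+ (2 * p) - 1])%Z
  /\
  (Gp p ^+ 2 = legendre (-1) p * (p%:Z - ((2%:Z ^+ (2 * p) - 1) %/ 3)%Z)
     %[mod 2%:Z ^+ (2 * p) - 1])%Z.
Proof.
move=> pP podd gO grt _ hinv.
have p1 := prime_gt1 pP.
set M := (2 ^ (2 * p) - 1)%N.
have M4 : (4 <= 2 ^ (2 * p))%N.
  by rewrite (_ : 4 = 2 ^ 2)%N // leq_exp2l //; lia.
have M1 : (1 < M)%N by rewrite /M; lia.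
have Mz : 2%:Z ^+ (2 * p) - 1 = M%:Z.
  by rewrite /M -subzn ?expn_gt0 //= -[in RHS]natz natrX.
rewrite Mz in hinv *.
pose w : 'Z_M := 2.
pose h : 'Z_M := inv2%:~R.
have w2p : w ^+ (2 * p) = 1.
  rewrite /w -natrX (_ : (1 : 'Z_M) = 1%:R) //; apply/eqP; rewrite Zn_nat_eq //.
  rewrite (_ : (2 ^ (2 * p) = 1 + M)%N); first by rewrite modnDr.
  rewrite /M; lia.
have h2 : 2 * h = 1.
  have := Zn_eqmod' M1 hinv; rewrite intrM => e; exact: e.
pose chi a := leg (a%:R : 'Z_p).
have T3 : (M%:Z %/ 3)%Z = \sum_(0 <= a < p) (4 : int) ^+ a.
  rewrite -Mz (_ : 2%:Z ^+ (2 * p) = 4 ^+ p); last by rewrite exprM.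
  by rewrite -sum4 mulKz.
have phiT : (((M%:Z %/ 3)%Z)%:~R : 'Z_M) = TT p w.
  rewrite T3 rmorph_sum /TT; apply: eq_bigr => a _.
  by rewrite rmorphXn /= /w expr2 -natrM.
have phiG : ((Gp p)%:~R : 'Z_M) = GG p chi w.
  rewrite /Gp Mz Zn_modz // rmorph_sum /GG; apply: eq_big_nat => a _.
  by rewrite /= intrM rmorphXn /= (legendreE pP) exprM.
have chi_ind' := chi_ind pP podd grt.
have chi_mul' := chi_mul pP podd grt.
have chi_sq' := chi_sq pP podd grt.
have chi_sum' := chi_sum pP podd gO grt.
have D0' := D0 pP grt.
move: phiT phiG; move: (M%:Z %/ 3)%Z (Gp p) => T0 G0 phiT phiG.
split.
  apply: (Zn_eqmod M1).
  have E1 := @even_sum _ p chi (D1p g p) (fun i => (i %% (2 * p))%N \in C1 g p)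
    w h pP h2 chi_ind' (fun b hb => s_even pP podd gO grt hb).
  have E2 := @odd_sum _ p chi (D1p g p) (fun i => (i %% (2 * p))%N \in C1 g p)
    w h pP podd w2p h2 chi_mul' chi_sum' chi_ind' D0' (fun b hb => s_odd pP podd gO grt hb).
  rewrite /= in E1 E2.
  rewrite /S2 rmorph_sum.
  rewrite (eq_bigr (fun i : 'I_(2 * p) => ((s_seq g p i)%:R * w ^+ i))); last first.
    by move=> i _; rewrite /= intrM rmorphXn.
  rewrite -(big_mkord xpredT (fun i => (s_seq g p i)%:R * w ^+ i)) sum_even_odd.
  rewrite /s_seq E1 E2.
  have e1 : ((2%:Z ^+ p)%:~R : 'Z_M) = w ^+ p by rewrite rmorphXn.
  have e0 : ((1 : int)%:~R : 'Z_M) = 1 by [].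
  have eL : ((legendre 2 p)%:~R : 'Z_M) = (chi 2%N)%:~R by rewrite (legendreE pP).
  rewrite !(intrD, intrB, intrM, intrN) e1 e0 eL phiT phiG -/h.
  ring.
apply: (Zn_eqmod M1).
rewrite rmorphXn /= phiG (GG_sq pP podd w2p chi_mul' chi_sq' chi_sum').
have eL : ((legendre (-1) p)%:~R : 'Z_M) = (chi p.-1)%:~R.
  rewrite (legendreE pP) /chi; congr ((leg _)%:~R).
  have -> : ((-1 : int)%:~R : 'Z_p) = -1 by rewrite intrN.
  apply/eqP; rewrite eq_sym -subr_eq0 opprK natr1 prednK ?pchar_Zp //; lia.
have ep : ((p%:Z)%:~R : 'Z_M) = p%:R by [].
by rewrite intrM intrB phiT eL ep.
Qed.
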